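(* For every integer $p\ge0$ and every complex $z$ with $e^z\ne1$, $$\sum_{n\ge0}\mathcal{B}_{n,p}\frac{z^n}{n!}=\frac{p!\,\exp(e^z-1)}{(e^z-1)^p}-\sum_{k=1}^{p}\frac{p^{\underline k}}{(e^z-1)^k}.$$
   Context: $p^{\underline k}=p(p-1)\cdots(p-k+1)$ is the falling factorial. For an integer $p\ge0$, the $p$-Bell numbers $\mathcal{B}_{n,p}$ are defined by $\sum_{n\ge0}\mathcal{B}_{n,p}\frac{z^n}{n!}=\sum_{n\ge0}\binom{n+p}{p}^{-1}\frac{(e^z-1)^n}{n!}$ (an entire function of $z$ whose Taylor series is the left side). *)

(* Defs.v *)
From Stdlib Require Import Reals Factorial.
From Coquelicot Require Import Coquelicot.
Open Scope R_scope.

Definition cexp (z : C) : C :=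
  (exp (fst z) * cos (snd z), exp (fst z) * sin (snd z)).

Fixpoint ffall (p k : nat) : nat :=
  match k with
  | O => 1%nat
  | S k' => (ffall p k' * (p - k'))%nat
  end.

(* The entire function  z |-> sum_{n>=0} binom(n+p,p)^{-1} (e^z-1)^n / n!,
   restricted to real z (where it is real-valued). *)
Definition pBell_egf (p : nat) (x : R) : R :=
  Series (fun n => (exp x - 1) ^ n / (INR (fact n) * Binomial.C (n + p) p)).

(* p-Bell numbers: B_{n,p} = n-th Taylor coefficient (times n!) at 0 of the
   entire function above, i.e. its n-th derivative at 0 (computed along the
   real axis, which gives the same value as the complex derivative). *)
Definition pBell (n p : nat) : R := Derive_n (pBell_egf p) n 0.

(* Main.v *)
Require Import Defs.
From Stdlib Require Import Reals Factorial Lia Lra FunctionalExtensionality.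
From Coquelicot Require Import Coquelicot.


Fixpoint csum (f : nat -> C) (n : nat) : C :=
  match n with O => RtoC 0 | S n => (csum f n + f n)%C end.
Fixpoint rsum (f : nat -> R) (n : nat) : R :=
  match n with O => 0 | S n => rsum f n + f n end.

Lemma csum_ext f g n : (forall k, (k < n)%nat -> f k = g k) -> csum f n = csum g n.
Proof. induction n; simpl; intros; auto. rewrite IHn; [|intros; apply H; lia]. rewrite H; auto. Qed.
Lemma rsum_ext f g n : (forall k, (k < n)%nat -> f k = g k) -> rsum f n = rsum g n.
Proof. induction n; simpl; intros; auto. rewrite IHn; [|intros; apply H; lia]. rewrite H; auto. Qed.

Lemma sum_n_csum (f : nat -> C) n : sum_n f n = csum f (S n).
Proof. induction n. rewrite sum_O; simpl. apply injective_projections; simpl; ring.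
rewrite sum_Sn, IHn. reflexivity. Qed.
Lemma sum_n_rsum (f : nat -> R) n : sum_n f n = rsum f (S n).
Proof. induction n. rewrite sum_O; simpl; ring. rewrite sum_Sn, IHn. reflexivity. Qed.
Lemma sum_f_rsum f n : sum_f_R0 f n = rsum f (S n).
Proof. induction n. simpl; ring. simpl. simpl in IHn. rewrite IHn. ring. Qed.

Lemma csum_fst f n : fst (csum f n) = rsum (fun k => fst (f k)) n.
Proof. induction n; simpl; auto. rewrite IHn; auto. Qed.
Lemma csum_snd f n : snd (csum f n) = rsum (fun k => snd (f k)) n.
Proof. induction n; simpl; auto. rewrite IHn; auto. Qed.

Lemma csum_shift f n : csum f (S n) = (f O + csum (fun k => f (S k)) n)%C.
Proof. induction n. simpl. apply injective_projections; simpl; ring.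
  change (csum f (S (S n))) with (csum f (S n) + f (S n))%C. rewrite IHn. simpl.
  apply injective_projections; simpl; ring. Qed.
Lemma rsum_shift f n : rsum f (S n) = f O + rsum (fun k => f (S k)) n.
Proof. induction n. simpl. ring. 
  change (rsum f (S (S n))) with (rsum f (S n) + f (S n)). rewrite IHn. simpl. ring. Qed.

Lemma csum_plus f g n : csum (fun k => f k + g k)%C n = (csum f n + csum g n)%C.
Proof. induction n; simpl. apply injective_projections; simpl; ring. rewrite IHn.
  apply injective_projections; simpl; ring. Qed.
Lemma csum_mult_l a f n : csum (fun k => a * f k)%C n = (a * csum f n)%C.
Proof. induction n; simpl. apply injective_projections; simpl; ring. rewrite IHn.
  apply injective_projections; simpl; ring. Qed.
Lemma rsum_mult_l a f n : rsum (fun k => a * f k) n = a * rsum f n.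
Proof. induction n; simpl. ring. rewrite IHn. ring. Qed.
Lemma rsum_plus f g n : rsum (fun k => f k + g k) n = rsum f n + rsum g n.
Proof. induction n; simpl. ring. rewrite IHn. ring. Qed.
Lemma rsum_le f g n : (forall k, (k < n)%nat -> f k <= g k) -> rsum f n <= rsum g n.
Proof. induction n; simpl; intros. lra. assert (f n <= g n) by (apply H; lia).
  assert (rsum f n <= rsum g n) by (apply IHn; intros; apply H; lia). lra. Qed.
Lemma rsum_nonneg f n : (forall k, (k < n)%nat -> 0 <= f k) -> 0 <= rsum f n.
Proof. intros. replace 0 with (rsum (fun _ => 0) n). apply rsum_le; auto.
  clear H. induction n; simpl; auto. rewrite IHn; ring. Qed.
Lemma rsum_zero f n : (forall k, (k < n)%nat -> f k = 0) -> rsum f n = 0.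
Proof. induction n; simpl; intros; auto. rewrite IHn, H; [ring|lia|]. intros; apply H; lia. Qed.
Lemma RtoC_rsum f n : RtoC (rsum f n) = csum (fun k => RtoC (f k)) n.
Proof. induction n; simpl; auto. rewrite <- IHn. apply injective_projections; simpl; ring. Qed.

Lemma is_series_fst (u : nat -> C) l : is_series u l -> is_series (fun n => fst (u n)) (fst l).
Proof.
  unfold is_series. intros H.
  assert (E : forall N, sum_n (fun n => fst (u n)) N = fst (sum_n u N)).
  { intros N. rewrite sum_n_csum, sum_n_rsum, csum_fst. auto. }
  eapply filterlim_ext. intros; symmetry; apply E.
  eapply filterlim_comp. apply H.
  intros P [eps HP]. exists eps. intros y Hy. apply HP. apply Hy.
Qed.
Lemma is_series_snd (u : nat -> C) l : is_series u l -> is_series (fun n => snd (u n)) (snd l).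
Proof.
  unfold is_series. intros H.
  assert (E : forall N, sum_n (fun n => snd (u n)) N = snd (sum_n u N)).
  { intros N. rewrite sum_n_csum, sum_n_rsum, csum_snd. auto. }
  eapply filterlim_ext. intros; symmetry; apply E.
  eapply filterlim_comp. apply H.
  intros P [eps HP]. exists eps. intros y Hy. apply HP. apply Hy.
Qed.
Lemma is_series_pair (u : nat -> C) l1 l2 :
  is_series (fun n => fst (u n)) l1 -> is_series (fun n => snd (u n)) l2 -> is_series u (l1, l2).
Proof.
  unfold is_series. intros H1 H2 P [eps HP].
  assert (A1 := H1 _ (locally_ball l1 eps)).
  assert (A2 := H2 _ (locally_ball l2 eps)).
  destruct A1 as [N1 A1]. destruct A2 as [N2 A2]. exists (max N1 N2). intros n Hn.
  apply HP. split; simpl.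
  - specialize (A1 n ltac:(lia)). simpl in A1. rewrite sum_n_rsum, <- csum_fst, <- sum_n_csum in A1. exact A1.
  - specialize (A2 n ltac:(lia)). simpl in A2. rewrite sum_n_rsum, <- csum_snd, <- sum_n_csum in A2. exact A2.
Qed.
Lemma is_series_finite {K : AbsRing} {V : NormedModule K} (a : nat -> V) N :
  (forall k, (N < k)%nat -> a k = zero) -> is_series a (sum_n a N).
Proof.
  intros Ha P HP. exists N. intros n Hn.
  replace (sum_n a n) with (sum_n a N). exact (locally_singleton _ _ HP).
  induction n. replace N with 0%nat by lia. auto.
  destruct (Nat.eq_dec N (S n)). subst; auto.
  rewrite sum_Sn, Ha, plus_zero_r by lia. apply IHn. lia.
Qed.
Lemma is_series_RtoC (a : nat -> R) l : is_series a l -> is_series (fun n => RtoC (a n)) (RtoC l).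
Proof. intros H. apply is_series_pair; simpl. exact H.
  assert (H0 := is_series_finite (K:=R_AbsRing) (V:=R_NormedModule) (fun _ => 0) 0 (fun _ _ => eq_refl)).
  rewrite sum_O in H0. exact H0. Qed.


Lemma ps_le (a : nat -> R) l : (forall n, 0 <= a n) -> is_series a l -> forall N, sum_n a N <= l.
Proof.
  intros Ha H N. apply (is_lim_seq_incr_compare (sum_n a) l). exact H.
  intros n. rewrite sum_Sn. simpl. specialize (Ha (S n)). unfold plus; simpl. lra.
Qed.
Lemma term_le (a : nat -> R) l : (forall n, 0 <= a n) -> is_series a l -> forall k, a k <= l.
Proof.
  intros Ha H k. eapply Rle_trans; [|apply (ps_le a l Ha H k)].
  rewrite sum_n_rsum. simpl. assert (0 <= rsum a k) by (apply rsum_nonneg; auto). lra.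
Qed.
Lemma series_ge0 (a : nat -> R) l : (forall n, 0 <= a n) -> is_series a l -> 0 <= l.
Proof. intros Ha H. eapply Rle_trans; [apply (Ha 0%nat)|]. apply (term_le a l Ha H). Qed.
Lemma pos_bounded (a : nat -> R) M : (forall n, 0 <= a n) -> (forall N, sum_n a N <= M) ->
  exists l, is_series a l /\ l <= M.
Proof.
  intros Ha HM. destruct (ex_finite_lim_seq_incr (sum_n a) M) as [l Hl].
  intros n. rewrite sum_Sn. specialize (Ha (S n)). unfold plus; simpl. lra. auto.
  exists l. split. exact Hl.
  assert (Hle := is_lim_seq_le (sum_n a) (fun _ => M) l M HM Hl (is_lim_seq_const M)).
  simpl in Hle. exact Hle.
Qed.
Lemma series_le (a b : nat -> R) la lb : (forall n, a n <= b n) -> is_series a la -> is_series b lb -> la <= lb.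
Proof.
  intros Hab Ha Hb. assert (Hle := is_lim_seq_le (sum_n a) (sum_n b) la lb).
  simpl in Hle. apply Hle; auto. intros n. rewrite !sum_n_rsum. apply rsum_le. auto.
Qed.
Lemma series_rsum (v : nat -> nat -> R) (s : nat -> R) N :
  (forall k, is_series (fun m => v m k) (s k)) -> is_series (fun m => rsum (v m) N) (rsum s N).
Proof.
  intros H. induction N; simpl.
  - assert (H0 := is_series_finite (K:=R_AbsRing) (V:=R_NormedModule) (fun _ => 0) 0 (fun _ _ => eq_refl)).
    rewrite sum_O in H0. exact H0.
  - apply (is_series_plus _ _ _ _ IHN (H N)).
Qed.

Lemma NN_le (v : nat -> nat -> R) s L : (forall m n, 0 <= v m n) ->
  (forall m, is_series (v m) (s m)) -> is_series s L ->
  (forall n, is_series (fun m => v m n) (Series (fun m => v m n))) /\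
  exists L', is_series (fun n => Series (fun m => v m n)) L' /\ L' <= L.
Proof.
  intros Hv Hs HL.
  assert (Hs0 : forall m, 0 <= s m) by (intros m; apply (series_ge0 (v m) _ (Hv m) (Hs m))).
  assert (Col : forall n, is_series (fun m => v m n) (Series (fun m => v m n))).
  { intros n. apply Series_correct.
    destruct (pos_bounded (fun m => v m n) L) as [t [Ht _]]. auto.
    intros N. eapply Rle_trans; [|apply (ps_le s L Hs0 HL N)].
    rewrite !sum_n_rsum. apply rsum_le. intros k _. apply (term_le (v k) _ (Hv k) (Hs k)).
    exists t; auto. }
  split; auto.
  apply pos_bounded.
  - intros n. apply (series_ge0 _ _ (fun m => Hv m n) (Col n)).
  - intros N. rewrite sum_n_rsum.
    assert (H1 := series_rsum v (fun n => Series (fun m => v m n)) (S N) Col).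
    refine (series_le _ _ _ _ _ H1 HL).
    intros m. assert (X := ps_le _ _ (Hv m) (Hs m) N). rewrite sum_n_rsum in X. exact X.
Qed.

Lemma NN (v : nat -> nat -> R) s L : (forall m n, 0 <= v m n) ->
  (forall m, is_series (v m) (s m)) -> is_series s L ->
  (forall n, is_series (fun m => v m n) (Series (fun m => v m n))) /\
  is_series (fun n => Series (fun m => v m n)) L.
Proof.
  intros Hv Hs HL. destruct (NN_le v s L Hv Hs HL) as [Col [L' [HL' Hle]]].
  split; auto.
  destruct (NN_le (fun n m => v m n) (fun n => Series (fun m => v m n)) L' (fun n m => Hv m n) Col HL')
    as [_ [L'' [HL'' Hle']]].
  assert (E : forall m, Series (fun n => v m n) = s m) by (intros; apply is_series_unique; auto).
  assert (HL2 : is_series s L'') by (eapply is_series_ext; [apply E|apply HL'']).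
  assert (L'' = L). { rewrite <- (is_series_unique _ _ HL2). apply is_series_unique; auto. }
  replace L with L'; auto. lra.
Qed.

Lemma Rabs_plus_self x : 0 <= Rabs x + x.
Proof. unfold Rabs; destruct (Rcase_abs x); lra. Qed.

Lemma fubini_R (u : nat -> nat -> R) s L :
  (forall m, is_series (u m) (s m)) -> is_series s L ->
  (forall m, ex_series (fun n => Rabs (u m n))) ->
  ex_series (fun m => Series (fun n => Rabs (u m n))) ->
  (forall n, is_series (fun m => u m n) (Series (fun m => u m n))) /\
  is_series (fun n => Series (fun m => u m n)) L.
Proof.
  intros Hs HL Ha Hsa.
  set (sa := fun m => Series (fun n => Rabs (u m n))).
  assert (Hsa' : forall m, is_series (fun n => Rabs (u m n)) (sa m)) by (intros; apply Series_correct; auto).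
  destruct Hsa as [Lsa HLsa].
  assert (H1 : forall m, is_series (fun n => Rabs (u m n) + u m n) (sa m + s m))
    by (intros m; apply (is_series_plus _ _ _ _ (Hsa' m) (Hs m))).
  assert (H1L : is_series (fun m => sa m + s m) (Lsa + L)) by (apply (is_series_plus _ _ _ _ HLsa HL)).
  destruct (NN (fun m n => Rabs (u m n) + u m n) _ _ (fun m n => Rabs_plus_self (u m n)) H1 H1L) as [C1 S1].
  destruct (NN (fun m n => Rabs (u m n)) _ _ (fun m n => Rabs_pos _) Hsa' HLsa) as [C2 S2].
  assert (Col : forall n, is_series (fun m => u m n)
      (Series (fun m => Rabs (u m n) + u m n) - Series (fun m => Rabs (u m n)))).
  { intros n. eapply is_series_ext; [|apply (is_series_minus _ _ _ _ (C1 n) (C2 n))].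
    intros m; simpl. unfold plus, opp; simpl. ring. }
  assert (E : forall n, Series (fun m => u m n) =
      Series (fun m => Rabs (u m n) + u m n) - Series (fun m => Rabs (u m n)))
    by (intros; apply is_series_unique; auto).
  split. intros n. rewrite E. auto.
  replace L with (plus (Lsa + L) (opp Lsa)) by (unfold plus, opp; simpl; ring).
  eapply is_series_ext; [|apply (is_series_minus _ _ _ _ S1 S2)].
  intros n; simpl. rewrite E. unfold plus, opp; simpl. ring.
Qed.

Lemma Rabs_fst_le (c : C) : Rabs (fst c) <= Cmod c.
Proof. eapply Rle_trans; [|apply Rmax_Cmod]. apply Rmax_l. Qed.
Lemma Rabs_snd_le (c : C) : Rabs (snd c) <= Cmod c.
Proof. eapply Rle_trans; [|apply Rmax_Cmod]. apply Rmax_r. Qed.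

Lemma ex_series_le_R (a b : nat -> R) : (forall n, Rabs (a n) <= b n) -> ex_series b -> ex_series a.
Proof. intros H Hb. apply (ex_series_le (K:=R_AbsRing) (V:=R_CompleteNormedModule) a b); auto. Qed.

Lemma fubini_proj (pr : C -> R) (u : nat -> nat -> C) s L :
  (forall a, Rabs (pr a) <= Cmod a) ->
  (forall m, is_series (fun n => pr (u m n)) (pr (s m))) -> is_series (fun m => pr (s m)) (pr L) ->
  (forall m, ex_series (fun n => Cmod (u m n))) ->
  ex_series (fun m => Series (fun n => Cmod (u m n))) ->
  (forall n, is_series (fun m => pr (u m n)) (Series (fun m => pr (u m n)))) /\
  is_series (fun n => Series (fun m => pr (u m n))) (pr L).
Proof.
  intros Hpr Hs HL Ha Hsa. apply fubini_R with (s := fun m => pr (s m)); auto.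
  - intros m. apply (ex_series_le_R _ (fun n => Cmod (u m n))); auto.
    intros n. rewrite Rabs_Rabsolu. auto.
  - apply (ex_series_le_R _ (fun m => Series (fun n => Cmod (u m n)))); auto.
    intros m.
    assert (Hex : ex_series (fun n => Rabs (pr (u m n)))).
    { apply (ex_series_le_R _ (fun n => Cmod (u m n))); auto.
      intros n. rewrite Rabs_Rabsolu. auto. }
    rewrite Rabs_pos_eq. apply Series_le; auto. intros; split; auto using Rabs_pos.
    apply (series_ge0 (fun n => Rabs (pr (u m n)))). intros; apply Rabs_pos. apply Series_correct; auto.
Qed.

Lemma fubini_C (u : nat -> nat -> C) s L t :
  (forall m, is_series (u m) (s m)) -> is_series s L ->
  (forall m, ex_series (fun n => Cmod (u m n))) ->
  ex_series (fun m => Series (fun n => Cmod (u m n))) ->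
  (forall n, is_series (fun m => u m n) (t n)) -> is_series t L.
Proof.
  intros Hs HL Ha Hsa Ht.
  destruct (fubini_proj fst u s L Rabs_fst_le (fun m => is_series_fst _ _ (Hs m)) (is_series_fst _ _ HL) Ha Hsa) as [C1 S1].
  destruct (fubini_proj snd u s L Rabs_snd_le (fun m => is_series_snd _ _ (Hs m)) (is_series_snd _ _ HL) Ha Hsa) as [C2 S2].
  destruct L as [l1 l2]. apply is_series_pair.
  - eapply is_series_ext; [|apply S1]. intros n. simpl.
    apply is_series_unique. apply (is_series_fst _ _ (Ht n)).
  - eapply is_series_ext; [|apply S2]. intros n. simpl.
    apply is_series_unique. apply (is_series_snd _ _ (Ht n)).
Qed.


Lemma rsum_minus f g n : rsum (fun k => f k - g k) n = rsum f n - rsum g n.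
Proof. induction n; simpl. ring. rewrite IHn. ring. Qed.

Lemma cauchy_C (a b : nat -> C) la lb : is_series a la -> is_series b lb ->
  ex_series (fun n => Cmod (a n)) -> ex_series (fun n => Cmod (b n)) ->
  is_series (fun n => csum (fun k => a k * b (n - k)%nat)%C (S n)) (la * lb)%C.
Proof.
  intros Ha Hb Aa Ab.
  assert (Fa := is_series_fst _ _ Ha). assert (Sa := is_series_snd _ _ Ha).
  assert (Fb := is_series_fst _ _ Hb). assert (Sb := is_series_snd _ _ Hb).
  assert (AFa : ex_series (fun n => Rabs (fst (a n)))) by (apply (ex_series_le_R _ _ (fun n => ltac:(rewrite Rabs_Rabsolu; apply Rabs_fst_le)) Aa)).
  assert (ASa : ex_series (fun n => Rabs (snd (a n)))) by (apply (ex_series_le_R _ _ (fun n => ltac:(rewrite Rabs_Rabsolu; apply Rabs_snd_le)) Aa)).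
  assert (AFb : ex_series (fun n => Rabs (fst (b n)))) by (apply (ex_series_le_R _ _ (fun n => ltac:(rewrite Rabs_Rabsolu; apply Rabs_fst_le)) Ab)).
  assert (ASb : ex_series (fun n => Rabs (snd (b n)))) by (apply (ex_series_le_R _ _ (fun n => ltac:(rewrite Rabs_Rabsolu; apply Rabs_snd_le)) Ab)).
  assert (M1 := is_series_mult _ _ _ _ Fa Fb AFa AFb).
  assert (M2 := is_series_mult _ _ _ _ Sa Sb ASa ASb).
  assert (M3 := is_series_mult _ _ _ _ Fa Sb AFa ASb).
  assert (M4 := is_series_mult _ _ _ _ Sa Fb ASa AFb).
  destruct la as [x1 y1], lb as [x2 y2].
  change ((x1, y1) * (x2, y2))%C with (x1 * x2 - y1 * y2, x1 * y2 + y1 * x2).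
  apply is_series_pair.
  - eapply is_series_ext; [|apply (is_series_minus _ _ _ _ M1 M2)].
    intros n. cbv beta. rewrite (csum_fst _ (S n)), !sum_f_rsum. unfold plus, opp; simpl.
    rewrite rsum_minus. ring.
  - eapply is_series_ext; [|apply (is_series_plus _ _ _ _ M3 M4)].
    intros n. cbv beta. rewrite (csum_snd _ (S n)), !sum_f_rsum. unfold plus; simpl. rewrite rsum_plus. ring.
Qed.


Definition cf (n k : nat) : R := / (INR (fact k) * INR (fact (n - k))).

Lemma fact_pos_R k : 0 < INR (fact k).
Proof. apply lt_0_INR, lt_O_fact. Qed.
Lemma fact_neq_R k : INR (fact k) <> 0.
Proof. apply Rgt_not_eq, fact_pos_R. Qed.

Lemma cf_S1 n j : (j <= n)%nat -> INR (S j) * cf (S n) (S j) = cf n j.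
Proof. intros H. unfold cf. replace (S n - S j)%nat with (n - j)%nat by lia.
  rewrite fact_simpl, mult_INR. field. repeat split; try apply fact_neq_R; apply not_0_INR; lia. Qed.
Lemma cf_S2 n k : (k <= n)%nat -> INR (S n - k) * cf (S n) k = cf n k.
Proof. intros H. unfold cf. replace (S n - k)%nat with (S (n - k))%nat by lia.
  rewrite fact_simpl, mult_INR. field. repeat split; try apply fact_neq_R. apply not_0_INR; lia. Qed.

Lemma binom_C (a b : C) n :
  csum (fun k => RtoC (cf n k) * (Cpow a k * Cpow b (n - k)))%C (S n) = (RtoC (/ INR (fact n)) * Cpow (a + b) n)%C.
Proof.
  induction n.
  - simpl. unfold cf. simpl. apply injective_projections; simpl; field.
  - set (X := fun k => (Cpow a k * Cpow b (S n - k))%C).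
    assert (E : forall k, (k < S (S n))%nat -> (RtoC (cf (S n) k) * X k)%C =
        (RtoC (/ INR (S n)) * (RtoC (INR k * cf (S n) k) * X k + RtoC (INR (S n - k) * cf (S n) k) * X k))%C).
    { intros k Hk. rewrite <- Cmult_plus_distr_r, <- RtoC_plus, <- Rmult_plus_distr_r, <- plus_INR.
      replace (k + (S n - k))%nat with (S n) by lia. rewrite Cmult_assoc, <- RtoC_mult.
      rewrite <- Rmult_assoc, Rinv_l, Rmult_1_l. auto. apply not_0_INR; lia. }
    change (csum (fun k => RtoC (cf (S n) k) * X k)%C (S (S n)) = (RtoC (/ INR (fact (S n))) * Cpow (a + b) (S n))%C).
    rewrite (csum_ext _ _ _ E), csum_mult_l, csum_plus.
    rewrite csum_shift. simpl (INR 0). rewrite Rmult_0_l, Cmult_0_l, Cplus_0_l.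
    rewrite (csum_ext _ (fun j => a * (RtoC (cf n j) * (Cpow a j * Cpow b (n - j))))%C).
    2:{ intros j Hj. rewrite cf_S1 by lia. unfold X. replace (S n - S j)%nat with (n - j)%nat by lia.
        simpl Cpow. ring. }
    rewrite csum_mult_l, IHn.
    change (csum (fun k => RtoC (INR (S n - k) * cf (S n) k) * X k)%C (S (S n))) with
      (csum (fun k => RtoC (INR (S n - k) * cf (S n) k) * X k)%C (S n) + RtoC (INR (S n - S n) * cf (S n) (S n)) * X (S n))%C.
    rewrite Nat.sub_diag. simpl (INR 0). rewrite Rmult_0_l, Cmult_0_l, Cplus_0_r.
    rewrite (csum_ext _ (fun k => b * (RtoC (cf n k) * (Cpow a k * Cpow b (n - k))))%C).
    2:{ intros k Hk. rewrite cf_S2 by lia. unfold X. replace (S n - k)%nat with (S (n - k)) by lia.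
        simpl Cpow. ring. }
    rewrite csum_mult_l, IHn.
    rewrite fact_simpl, mult_INR, Rinv_mult. rewrite !RtoC_mult. simpl Cpow. ring.
Qed.


Lemma is_series_zero_R (f : nat -> R) : (forall n, f n = 0) -> is_series f 0.
Proof.
  intros H. assert (H0 := is_series_finite (K:=R_AbsRing) (V:=R_NormedModule) f 0 (fun k _ => H k)).
  rewrite sum_O, H in H0. exact H0.
Qed.

Lemma pown (x : R) n : @pow_n (AbsRing.Ring R_AbsRing) x n = x ^ n.
Proof. induction n; simpl; try rewrite IHn; reflexivity. Qed.

Lemma is_pseries_R (a : nat -> R) x l : is_pseries a x l -> is_series (fun n => a n * x ^ n) l.
Proof. unfold is_pseries. apply is_series_ext. intros n. unfold scal; simpl. unfold mult; simpl. rewrite pown. ring. Qed.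
Lemma is_pseries_R' (a : nat -> R) x l : is_series (fun n => a n * x ^ n) l -> is_pseries a x l.
Proof. unfold is_pseries. apply is_series_ext. intros n. unfold scal; simpl. unfold mult; simpl. rewrite Rmult_comm; f_equal; symmetry; apply pown. Qed.

Lemma exp_R (x : R) : is_series (fun n => / INR (fact n) * x ^ n) (exp x).
Proof.
  assert (H := is_exp_Reals x). unfold is_pseries in H.
  eapply is_series_ext; [|apply H]. intros n. unfold scal; simpl. unfold mult; simpl. rewrite pown. ring.
Qed.

Lemma Cpow_scale (r : R) (c : C) n : Cpow (RtoC r * c)%C n = (RtoC (r ^ n) * Cpow c n)%C.
Proof. induction n; simpl. apply injective_projections; simpl; ring.
  rewrite IHn, RtoC_mult. ring. Qed.

Lemma Cpow_i k : Cpow (0, 1) (2 * k) = ((-1) ^ k, 0) /\ Cpow (0, 1) (2 * k + 1) = (0, (-1) ^ k).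
Proof.
  induction k.
  - simpl. split; apply injective_projections; simpl; ring.
  - destruct IHk as [H1 H2].
    replace (2 * S k)%nat with (S (S (2 * k))) by lia.
    replace (S (S (2 * k)) + 1)%nat with (S (S (2 * k + 1))) by lia.
    assert (E : forall m, Cpow (0,1) (S (S m)) = ((0,1) * ((0,1) * Cpow (0,1) m))%C) by reflexivity.
    rewrite !E, H1, H2. split; apply injective_projections; simpl; ring.
Qed.

Lemma cis_series (y : R) : is_series (fun n => RtoC (/ INR (fact n)) * Cpow (0, y) n)%C (cos y, sin y).
Proof.
  assert (Ey : forall n, (RtoC (/ INR (fact n)) * Cpow (0, y) n)%C =
     ((/ INR (fact n) * fst (Cpow (0,1) n)) * y ^ n, (/ INR (fact n) * snd (Cpow (0,1) n)) * y ^ n)).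
  { intros n. replace (0, y) with (RtoC y * (0, 1))%C by (apply injective_projections; simpl; ring).
    rewrite Cpow_scale. destruct (Cpow (0,1) n) as [u v]. apply injective_projections; simpl; ring. }
  eapply is_series_ext. intros n; symmetry; apply Ey.
  apply is_series_pair; simpl.
  - replace (cos y) with (cos y + y * 0) by ring.
    apply is_pseries_R, is_pseries_odd_even; apply is_pseries_R'.
    + assert (Hc : cos_in (Rsqr y) (cos y)).
      { unfold cos. destruct (exist_cos (Rsqr y)) as [l Hl]. exact Hl. }
      unfold cos_in in Hc. apply is_series_Reals in Hc.
      eapply is_series_ext; [|apply Hc]. intros n. destruct (Cpow_i n) as [H1 H2]. rewrite H1.
      unfold cos_n, Rsqr. simpl fst. unfold Rdiv. rewrite (Rmult_comm ((-1) ^ n)). f_equal. f_equal. simpl. ring.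
    + apply is_series_zero_R. intros n. destruct (Cpow_i n) as [H1 H2]. rewrite H2. simpl fst. ring.
  - unfold sin. destruct (exist_sin (Rsqr y)) as [l Hl].
    replace (y * l) with (0 + y * l) by ring.
    apply is_pseries_R, is_pseries_odd_even; apply is_pseries_R'.
    + apply is_series_zero_R. intros n. destruct (Cpow_i n) as [H1 H2]. rewrite H1. simpl snd. ring.
    + unfold sin_in in Hl. apply is_series_Reals in Hl.
      eapply is_series_ext; [|apply Hl]. intros n. destruct (Cpow_i n) as [H1 H2]. rewrite H2.
      unfold sin_n, Rsqr. simpl snd. unfold Rdiv. rewrite (Rmult_comm ((-1) ^ n)). f_equal. f_equal. simpl. ring.
Qed.

Lemma RtoC_neq (r : R) : r <> 0 -> RtoC r <> RtoC 0.
Proof. intros H E. apply H. apply (f_equal fst) in E. exact E. Qed.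

Lemma ex_series_expabs (r : R) : ex_series (fun n => / INR (fact n) * Rabs r ^ n).
Proof. exists (exp (Rabs r)). apply exp_R. Qed.

Lemma cexp_series (w : C) : is_series (fun n => RtoC (/ INR (fact n)) * Cpow w n)%C (cexp w).
Proof.
  destruct w as [x y].
  assert (Ha : is_series (fun n => RtoC (/ INR (fact n) * x ^ n)) (RtoC (exp x))) by (apply is_series_RtoC, exp_R).
  assert (Hb := cis_series y).
  assert (Aa : ex_series (fun n => Cmod (RtoC (/ INR (fact n) * x ^ n)))).
  { eapply ex_series_ext; [|apply (ex_series_expabs x)]. intros n.
    rewrite Cmod_R, Rabs_mult, RPow_abs, (Rabs_pos_eq (/ _)); auto.
    apply Rlt_le, Rinv_0_lt_compat, fact_pos_R. }
  assert (Ab : ex_series (fun n => Cmod (RtoC (/ INR (fact n)) * Cpow (0, y) n)%C)).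
  { eapply ex_series_ext; [|apply (ex_series_expabs (Cmod (0,y)))]. intros n.
    rewrite Cmod_mult, Cmod_R, Cmod_pow, (Rabs_pos_eq (/ _)), Rabs_pos_eq; auto.
    apply Cmod_ge_0. apply Rlt_le, Rinv_0_lt_compat, fact_pos_R. }
  assert (H := cauchy_C _ _ _ _ Ha Hb Aa Ab).
  replace (cexp (x, y)) with (RtoC (exp x) * (cos y, sin y))%C
    by (unfold cexp; apply injective_projections; simpl; ring).
  eapply is_series_ext; [|apply H]. intros n. cbv beta.
  replace (x, y) with (RtoC x + (0, y))%C by (apply injective_projections; simpl; ring).
  rewrite <- binom_C. apply csum_ext. intros k Hk.
  unfold cf. rewrite Rinv_mult, !RtoC_mult, RtoC_pow. ring.
Qed.


Fixpoint D (m n : nat) : R :=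
  match m with
  | O => if Nat.eqb n 0 then 1 else 0
  | S m' => rsum (fun k => Binomial.C n k * D m' k) n
  end.

Lemma binC_pos n k : 0 <= Binomial.C n k.
Proof. unfold Binomial.C. apply Rle_mult_inv_pos. apply pos_INR.
  apply Rmult_lt_0_compat; apply fact_pos_R. Qed.

Lemma D_nonneg m n : 0 <= D m n.
Proof. revert n; induction m; intros n; simpl.
  destruct (Nat.eqb n 0); lra.
  apply rsum_nonneg. intros k _. apply Rmult_le_pos; auto using binC_pos. Qed.

Lemma D_zero m n : (n < m)%nat -> D m n = 0.
Proof. revert n; induction m; intros n H. lia. simpl.
  apply rsum_zero. intros k Hk. rewrite IHm by lia. ring. Qed.

Definition ee (n : nat) : R := if Nat.eqb n 0 then 0 else 1.

Lemma is_series_first_C (c : C) : is_series (fun n => if Nat.eqb n 0 then c else RtoC 0) c.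
Proof.
  assert (H := is_series_finite (fun n => if Nat.eqb n 0 then c else RtoC 0) 0).
  rewrite sum_O in H. simpl in H. apply H. intros k Hk. destruct k. lia. reflexivity.
Qed.

Lemma ee_series (z : C) : is_series (fun n => RtoC (ee n / INR (fact n)) * Cpow z n)%C (cexp z - 1)%C.
Proof.
  assert (H := is_series_minus _ _ _ _ (cexp_series z) (is_series_first_C 1)).
  eapply is_series_ext; [|apply H]. intros n. unfold ee. destruct n; simpl.
  - unfold plus, opp; simpl. apply injective_projections; simpl; field.
  - unfold Rdiv. rewrite Rmult_1_l. unfold plus, opp; simpl. apply injective_projections; simpl; ring.
Qed.

Lemma Cmod_term (a : R) (z : C) n : 0 <= a -> Cmod (RtoC a * Cpow z n)%C = a * Cmod z ^ n.
Proof. intros Ha. rewrite Cmod_mult, Cmod_R, Cmod_pow, Rabs_pos_eq; auto. Qed.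

Lemma fst_term (a r : R) n : fst (RtoC a * Cpow (RtoC r) n)%C = a * r ^ n.
Proof. rewrite <- RtoC_pow, <- RtoC_mult. reflexivity. Qed.

Lemma csum_RtoC_r (f : nat -> R) (c : C) n : csum (fun k => RtoC (f k) * c)%C n = (RtoC (rsum f n) * c)%C.
Proof. induction n; simpl. apply injective_projections; simpl; ring.
  rewrite IHn, RtoC_plus. ring. Qed.

Lemma step1 m : forall z, is_series (fun n => RtoC (D m n / INR (fact n)) * Cpow z n)%C (Cpow (cexp z - 1) m).
Proof.
  induction m; intros z.
  - simpl. eapply is_series_ext; [|apply (is_series_first_C 1)]. intros n.
    destruct n; simpl. apply injective_projections; simpl; field.
    apply injective_projections; simpl; unfold Rdiv; ring.
  - set (b := fun n => (RtoC (D m n / INR (fact n)) * Cpow z n)%C).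
    set (a := fun n => (RtoC (ee n / INR (fact n)) * Cpow z n)%C).
    assert (Ab : ex_series (fun n => Cmod (b n))).
    { assert (H := is_series_fst _ _ (IHm (RtoC (Cmod z)))).
      eexists. eapply is_series_ext; [|apply H]. intros n. cbv beta. unfold b.
      rewrite fst_term, Cmod_term; auto. apply Rle_mult_inv_pos; auto using D_nonneg, fact_pos_R. }
    assert (Aa : ex_series (fun n => Cmod (a n))).
    { refine (ex_series_le_R _ _ _ (ex_series_expabs (Cmod z))).
      intros n. unfold a. rewrite Rabs_pos_eq by apply Cmod_ge_0.
      assert (0 <= ee n <= 1) by (unfold ee; destruct (Nat.eqb n 0); lra).
      rewrite Cmod_term, <- (Rabs_pos_eq (Cmod z)) by (auto using Cmod_ge_0; apply Rle_mult_inv_pos; try lra; apply fact_pos_R).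
      unfold Rdiv. rewrite (Rmult_comm (ee n)). rewrite Rmult_assoc.
      apply Rmult_le_compat_l. apply Rlt_le, Rinv_0_lt_compat, fact_pos_R.
      assert (0 <= Rabs (Cmod z) ^ n) by (apply pow_le, Rabs_pos). rewrite Rabs_Rabsolu. nra. }
    assert (H := cauchy_C b a _ _ (IHm z) (ee_series z) Ab Aa).
    rewrite Cpow_S, Cmult_comm.
    eapply is_series_ext; [|apply H]. intros n. cbv beta. unfold a, b.
    rewrite (csum_ext _ (fun k => RtoC (D m k / INR (fact k) * (ee (n - k) / INR (fact (n - k)))) * Cpow z n)%C).
    2:{ intros k Hk. rewrite (RtoC_mult (D m k / _)).
        replace (Cpow z n) with (Cpow z k * Cpow z (n - k))%C. ring.
        rewrite <- Cpow_add_r. f_equal. lia. }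
    rewrite csum_RtoC_r. f_equal. f_equal.
    simpl rsum. unfold ee at 2. rewrite Nat.sub_diag. simpl Nat.eqb.
    simpl (if true then _ else _). unfold Rdiv at 3 4. rewrite Rmult_0_l, Rmult_0_r, Rplus_0_r.
    simpl D. unfold Rdiv at 3. rewrite Rmult_comm, <- rsum_mult_l. apply rsum_ext. intros k Hk.
    unfold ee. replace (Nat.eqb (n - k) 0) with false by (symmetry; apply Nat.eqb_neq; lia).
    unfold Binomial.C. field. repeat split; apply fact_neq_R.
Qed.


Definition cc (p m : nat) : R := / (INR (fact m) * Binomial.C (m + p) p).
Definition bb (p n : nat) : R := rsum (fun m => cc p m * D m n) (S n).

Lemma fact_mul_le m p : (fact m * fact p <= fact (m + p))%nat.
Proof. induction p. rewrite Nat.add_0_r. simpl. lia.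
  replace (m + S p)%nat with (S (m + p)) by lia. simpl (fact (S p)). simpl (fact (S (m + p))). nia. Qed.

Lemma binC_ge1 m p : 1 <= Binomial.C (m + p) p.
Proof. unfold Binomial.C. replace (m + p - p)%nat with m by lia.
  assert (H := fact_mul_le m p). apply le_INR in H. rewrite mult_INR in H.
  assert (0 < INR (fact p) * INR (fact m)) by (apply Rmult_lt_0_compat; apply fact_pos_R).
  apply (Rmult_le_reg_r (INR (fact p) * INR (fact m))); auto. unfold Rdiv.
  rewrite Rmult_assoc, Rinv_l; lra. Qed.

Lemma cc_pos p m : 0 < cc p m.
Proof. unfold cc. apply Rinv_0_lt_compat, Rmult_lt_0_compat. apply fact_pos_R.
  assert (H := binC_ge1 m p). lra. Qed.
Lemma cc_le p m : cc p m <= / INR (fact m).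
Proof. unfold cc. apply Rinv_le_contravar. apply fact_pos_R.
  assert (H := binC_ge1 m p). assert (H0 := fact_pos_R m).
  rewrite <- (Rmult_1_r (INR (fact m))) at 1. apply Rmult_le_compat_l; lra. Qed.

Lemma ex_cc p q : ex_series (fun m => cc p m * q ^ m).
Proof.
  refine (ex_series_le_R _ _ _ (ex_series_expabs q)). intros m.
  rewrite Rabs_mult, Rabs_pos_eq, <- RPow_abs by (apply Rlt_le, cc_pos).
  apply Rmult_le_compat_r. apply pow_le, Rabs_pos. apply cc_le.
Qed.

Lemma cexp_RtoC_m1 (r : R) : (cexp (RtoC r) - 1)%C = RtoC (exp r - 1).
Proof. unfold cexp. apply injective_projections; simpl; rewrite ?cos_0, ?sin_0; ring. Qed.

Lemma step1_R m r : is_series (fun n => D m n / INR (fact n) * r ^ n) ((exp r - 1) ^ m).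
Proof.
  assert (H := is_series_fst _ _ (step1 m (RtoC r))).
  rewrite cexp_RtoC_m1, <- RtoC_pow in H.
  eapply is_series_ext; [|apply H]. intros n. cbv beta. rewrite fst_term. auto.
Qed.

Lemma step3 p z L : is_series (fun m => RtoC (cc p m) * Cpow (cexp z - 1) m)%C L ->
  is_series (fun n => RtoC (bb p n / INR (fact n)) * Cpow z n)%C L.
Proof.
  intros HL.
  set (u := fun m n => (RtoC (cc p m * (D m n / INR (fact n))) * Cpow z n)%C).
  set (r := Cmod z).
  assert (Hu : forall m, is_series (u m) (RtoC (cc p m) * Cpow (cexp z - 1) m)%C).
  { intros m. assert (H := is_series_scal_l (RtoC (cc p m)) _ _ (step1 m z)).
    eapply is_series_ext; [|apply H]. intros n. unfold u, scal; simpl. unfold mult; simpl.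
    rewrite RtoC_mult. ring. }
  assert (Hm : forall m, is_series (fun n => Cmod (u m n)) (cc p m * (exp r - 1) ^ m)).
  { intros m. assert (H := is_series_scal_l (cc p m) _ _ (step1_R m r)).
    eapply is_series_ext; [|apply H]. intros n. unfold u, scal; simpl. unfold mult; simpl.
    rewrite Cmod_term. unfold r; ring.
    apply Rmult_le_pos. apply Rlt_le, cc_pos. apply Rle_mult_inv_pos. apply D_nonneg. apply fact_pos_R. }
  apply (fubini_C u _ L _ Hu HL).
  - intros m. eexists. apply Hm.
  - eapply ex_series_ext; [|apply (ex_cc p (exp r - 1))]. intros m. symmetry. apply is_series_unique. apply Hm.
  - intros n. assert (H := is_series_finite (fun m => u m n) n).
    rewrite sum_n_csum in H. unfold u in H. rewrite csum_RtoC_r in H.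
    replace (rsum (fun m => cc p m * (D m n / INR (fact n))) (S n)) with (bb p n / INR (fact n)) in H.
    apply H. intros k Hk. unfold u. rewrite D_zero by lia. unfold Rdiv. rewrite Rmult_0_l, Rmult_0_r. apply injective_projections; simpl; ring.
    unfold bb, Rdiv. rewrite Rmult_comm, <- rsum_mult_l. apply rsum_ext. intros; ring.
Qed.

Lemma egf_eq p x : is_series (fun n => bb p n / INR (fact n) * x ^ n) (pBell_egf p x).
Proof.
  assert (Ex : is_series (fun m => cc p m * (exp x - 1) ^ m) (pBell_egf p x)).
  { unfold pBell_egf. eapply is_series_ext; [|apply Series_correct].
    intros m. unfold cc, Rdiv. match goal with |- ?a = ?b => change (@eq R a b) end. ring.
    eapply ex_series_ext; [|apply (ex_cc p (exp x - 1))]. intros m. unfold cc, Rdiv. match goal with |- ?a = ?b => change (@eq R a b) end. ring. }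
  apply is_series_RtoC in Ex.
  assert (H := step3 p (RtoC x) (RtoC (pBell_egf p x))).
  rewrite cexp_RtoC_m1 in H.
  apply is_series_fst in H.
  eapply is_series_ext; [|apply H]. intros n. cbv beta. rewrite fst_term. auto.
  eapply is_series_ext; [|apply Ex]. intros m. cbv beta. rewrite RtoC_mult, RtoC_pow. auto.
Qed.

Lemma pBell_eq n p : pBell n p = bb p n.
Proof.
  set (a := fun n => bb p n / INR (fact n)).
  assert (E : pBell_egf p = PSeries a).
  { apply functional_extensionality. intros x. unfold PSeries. symmetry. apply is_series_unique.
    eapply is_series_ext; [|apply (egf_eq p x)]. intros k. unfold a. auto. }
  unfold pBell. rewrite E, Derive_n_coef. unfold a. field. apply fact_neq_R.
  destruct (Rbar_lt_dec 0 (CV_radius a)) as [H|H]; auto. exfalso.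
  assert (H0 : CV_radius a = 0).
  { assert (H1 := CV_radius_ge_0 a). destruct (CV_radius a); simpl in *; try tauto.
    f_equal. lra. }
  apply (CV_disk_outside a 1). rewrite H0, Rabs_R1. simpl. lra.
  apply ex_series_lim_0. eexists. apply (egf_eq p 1).
Qed.


Lemma ffall_S p k : ffall (S p) (S k) = (S p * ffall p k)%nat.
Proof. induction k. simpl. lia. change (ffall (S p) (S (S k))) with (ffall (S p) (S k) * (S p - S k))%nat.
  rewrite IHk. simpl (ffall p (S k)). replace (S p - S k)%nat with (p - k)%nat by lia. lia. Qed.

Lemma is_series_shift_C (a : nat -> C) l p : is_series a l ->
  is_series (fun k => a (p + k)%nat) (l - csum a p)%C.
Proof.
  induction p; intros H.
  - simpl. replace (l - 0)%C with l by (apply injective_projections; simpl; ring). auto.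
  - specialize (IHp H).
    assert (IH2 : is_series (fun k => a (p + k)%nat) (plus (l - csum a (S p))%C (a (p + 0)%nat))).
    { replace (plus (l - csum a (S p))%C (a (p + 0)%nat)) with (l - csum a p)%C; auto.
      rewrite Nat.add_0_r. unfold plus; simpl. apply injective_projections; simpl; ring. }
    apply (is_series_incr_1 (fun k => a (p + k)%nat)) in IH2.
    eapply is_series_ext; [|apply IH2]. intros k. simpl. f_equal. lia.
Qed.

Lemma Fid (w y : C) : (y * w = 1)%C -> forall p,
  (RtoC (INR (fact p)) * Cpow y p * csum (fun k => RtoC (/ INR (fact k)) * Cpow w k) p)%C =
  csum (fun k => RtoC (INR (ffall p (S k))) * Cpow y (S k))%C p.
Proof.
  intros Hyw p. induction p.
  - simpl. apply injective_projections; simpl; ring.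
  - rewrite (csum_shift (fun k => RtoC (INR (ffall (S p) (S k))) * Cpow y (S k))%C).
    cbv beta.
    rewrite (csum_ext (fun k => RtoC (INR (ffall (S p) (S (S k)))) * Cpow y (S (S k)))%C (fun k => RtoC (INR (S p)) * y * (RtoC (INR (ffall p (S k))) * Cpow y (S k)))%C).
    2:{ intros k Hk. rewrite ffall_S, mult_INR, RtoC_mult. rewrite (Cpow_S y (S k)). ring. }
    rewrite csum_mult_l, <- IHp.
    change (csum (fun k => RtoC (/ INR (fact k)) * Cpow w k)%C (S p)) with
      (csum (fun k => RtoC (/ INR (fact k)) * Cpow w k)%C p + RtoC (/ INR (fact p)) * Cpow w p)%C.
    rewrite fact_simpl, mult_INR, RtoC_mult, Cpow_S.
    rewrite ffall_S. simpl ffall. rewrite Nat.mul_1_r.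
    assert (HP : (Cpow y p * Cpow w p)%C = RtoC 1).
    { rewrite <- Cpow_mult_l, Hyw. rewrite Cpow_1_l. auto. }
    assert (HF : (RtoC (INR (fact p)) * RtoC (/ INR (fact p)))%C = RtoC 1).
    { rewrite <- RtoC_mult, Rinv_r. auto. apply fact_neq_R. }
    transitivity (RtoC (INR (S p)) * y * (RtoC (INR (fact p)) * Cpow y p * csum (fun k => RtoC (/ INR (fact k)) * Cpow w k) p) + RtoC (INR (S p)) * y * ((RtoC (INR (fact p)) * RtoC (/ INR (fact p))) * (Cpow y p * Cpow w p)))%C.
    ring. rewrite HP, HF. simpl Cpow. ring.
Qed.

Lemma cc_eq p k : cc p k = INR (fact p) * / INR (fact (p + k)).
Proof. unfold cc, Binomial.C. replace (k + p - p)%nat with k by lia. replace (k + p)%nat with (p + k)%nat by lia.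
  field. repeat split; apply fact_neq_R. Qed.

Lemma step2 p w : w <> RtoC 0 ->
  is_series (fun m => RtoC (cc p m) * Cpow w m)%C
    (RtoC (INR (fact p)) * cexp w / Cpow w p
     - sum_n (fun k => if (1 <=? k)%nat then (RtoC (INR (ffall p k)) / Cpow w k)%C else RtoC 0) p)%C.
Proof.
  intros Hw.
  assert (Hwp : forall k, Cpow w k <> RtoC 0) by (intros; apply Cpow_nz; auto).
  assert (H0 := is_series_shift_C _ _ p (cexp_series w)).
  assert (H1 := is_series_scal_l (RtoC (INR (fact p)) / Cpow w p)%C _ _ H0).
  match goal with |- is_series _ ?L => replace L with (scal (RtoC (INR (fact p)) / Cpow w p)%C (cexp w - csum (fun n => RtoC (/ INR (fact n)) * Cpow w n)%C p)%C) end.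
  - eapply is_series_ext; [|apply H1]. intros k. unfold scal; simpl. unfold mult; simpl. rewrite cc_eq, RtoC_mult, Cpow_add_r.
    field. auto.
  - unfold scal; simpl. unfold mult; simpl.
    rewrite sum_n_csum, csum_shift. simpl (1 <=? 0)%nat.
    cbv beta.
    rewrite (csum_ext (fun k => if (1 <=? S k)%nat then (RtoC (INR (ffall p (S k))) / Cpow w (S k))%C else RtoC 0) (fun k => RtoC (INR (ffall p (S k))) * Cpow (/ w) (S k))%C).
    2:{ intros k Hk. simpl (1 <=? S k)%nat. rewrite Cpow_inv by auto. unfold Cdiv. auto. }
    rewrite <- (Fid w (/ w)). rewrite Cpow_inv by auto. field. auto.
    field. auto.
Qed.

Theorem mainTheorem5 (p : nat) (z : C) (hz : cexp z <> RtoC 1) :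
  is_series (fun n : nat => (RtoC (pBell n p) * Cpow z n / RtoC (INR (fact n)))%C)
    (RtoC (INR (fact p)) * cexp (cexp z - 1) / Cpow (cexp z - 1) p
     - sum_n (fun k : nat =>
                if (1 <=? k)%nat
                then (RtoC (INR (ffall p k)) / Cpow (cexp z - 1) k)%C
                else RtoC 0) p)%C.
Proof.
  assert (Hw : (cexp z - 1)%C <> RtoC 0).
  { intros E. apply hz. replace (cexp z) with ((cexp z - 1) + 1)%C by ring. rewrite E. ring. }
  assert (H := step3 p z _ (step2 p _ Hw)).
  eapply is_series_ext; [|apply H]. intros n. cbv beta.
  rewrite pBell_eq. unfold Rdiv. rewrite RtoC_mult, RtoC_inv by apply fact_neq_R.
  match goal with |- ?a = ?b => change (@eq C a b) end. unfold Cdiv. ring.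
Qed.
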